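(* Let $p,q$ be distinct positive integers and $n\ge1$. For every $x\in\{p,q\}^n$ and every sequence $s=(s_1,\dots,s_m)$, $m\ge1$, of elements of $\{p,q\}$, $$RLD^{p,q}_n(x, s_{1:m}) = RLD^{p,q}_n(y_1,(s_1))\circ RLD^{p,q}_n(y_2,(s_2))\circ\cdots\circ RLD^{p,q}_n(y_m,(s_m)),$$ where $\circ$ denotes concatenation, $y_1=x$, and $y_i=A^{p,q}_n(y_{i-1},(s_{i-1}))$ for $1<i\le m$.
   Context: Let $p,q$ be distinct positive integers. Define $\mathrm{Opp}(p)=q$, $\mathrm{Opp}(q)=p$. For $x\in\{p,q\}$ and a finite sequence $s=(s_1,\dots,s_m)$ of positive integers, $RLD^{p,q}(x,s)$ is the sequence over $\{p,q\}$ consisting of $s_1$ copies of $x$, then $s_2$ copies of $\mathrm{Opp}(x)$, then $s_3$ copies of $x$, and so on alternately. For $n\ge1$ and $x=(x_1,\dots,x_n)\in\{p,q\}^n$: $RLD^{p,q}_1(x_1,s)=RLD^{p,q}(x_1,s)$ and $RLD^{p,q}_n(x_{1:n},s)=RLD^{p,q}(x_n, RLD^{p,q}_{n-1}(x_{1:n-1},s))$. For a nonempty sequence $t$ over $\{p,q\}$, $\mathrm{OppEnd}(t)=\mathrm{Opp}(\text{last entry of } t)$. The automaton $A^{p,q}_n$ has state set $\{p,q\}^n$; for a state $x$ and a nonempty finite sequence $s$ over $\{p,q\}$, $A^{p,q}_n(x,s)$ is the state whose $i$-th coordinate is $\mathrm{OppEnd}(RLD^{p,q}_i(x_{1:i},s))$,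 $i=1,\dots,n$. *)

(* Defs.v *)
From mathcomp Require Import all_boot.
Set Implicit Arguments. Unset Strict Implicit. Unset Printing Implicit Defensive.

(* Opp over {p,q}: Opp p = q, Opp q = p (values outside {p,q} are never used). *)
Definition Opp (p q x : nat) : nat := if x == p then q else p.

Fixpoint RLD (p q x : nat) (s : seq nat) : seq nat :=
  match s with
  | [::] => [::]
  | a :: s' => nseq a x ++ RLD p q (Opp p q x) s'
  end.

(* RLD^{p,q}_n(x_{1:n}, s), x given as the list [:: x_1; ...; x_n]:
   RLD_n(x_{1:n},s) = RLD(x_n, RLD_{n-1}(x_{1:n-1}, s)). *)
Definition RLDn (p q : nat) (x : seq nat) (s : seq nat) : seq nat :=
  foldl (fun t xi => RLD p q xi t) s x.

(* OppEnd(t) = Opp(last entry of t) (t nonempty in all uses). *)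
Definition OppEnd (p q : nat) (t : seq nat) : nat := Opp p q (last 0 t).

Definition Aut (p q : nat) (x : seq nat) (s : seq nat) : seq nat :=
  [seq OppEnd p q (RLDn p q (take i x) s) | i <- iota 1 (size x)].

Fixpoint states (p q : nat) (x : seq nat) (s : seq nat) : seq (seq nat) :=
  match s with
  | [::] => [::]
  | a :: s' => x :: states p q (Aut p q x [:: a]) s'
  end.

(* Main.v *)
Require Import Defs.
From mathcomp Require Import all_boot.

Section S.
Variables p q : nat.
Hypotheses (hp : 0 < p) (hq : 0 < q).

Definition pos (a : nat) := 0 < a.

Lemma Opp_pos c : 0 < Opp p q c.
Proof. by rewrite /Opp; case: (c == p). Qed.

Lemma RLD_cat c s1 s2 :
  RLD p q c (s1 ++ s2) = RLD p q c s1 ++ RLD p q (iter (size s1) (Opp p q) c) s2.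
Proof.
elim: s1 c => [|a s1 IH] c //=.
by rewrite IH catA -iterSr.
Qed.

Lemma RLD_pos c T : 0 < c -> all pos (RLD p q c T).
Proof.
elim: T c => [|a T IH] c hc //=.
rewrite all_cat IH ?Opp_pos // andbT.
by apply/allP => y /nseqP [-> _].
Qed.

Lemma RLD_last c T y : all pos T -> T != [::] ->
  last y (RLD p q c T) = iter (size T).-1 (Opp p q) c.
Proof.
elim: T c y => [|a T IH] c y //= /andP [ha hT] _.
rewrite last_cat.
case: T IH hT => [|b T] IH hT /=.
  by case: a ha => // a _ /=; elim: a => //.
by rewrite IH //= -iterSr.
Qed.

Lemma RLD_nil c T : all pos T -> T != [::] -> 0 < c -> RLD p q c T != [::].
Proof.
case: T => [|[|a] T] //= /andP [] //.
Qed.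

Lemma RLDn_nil x : RLDn p q x [::] = [::].
Proof. by elim: x. Qed.

Lemma RLDn_props x s : all pos x -> all pos s -> s != [::] ->
  all pos (RLDn p q x s) && (RLDn p q x s != [::]).
Proof.
elim/last_ind: x => [|x c IH] //=; first by move=> _ -> ->.
rewrite all_rcons => /andP [hc hx] hs hs0.
rewrite /RLDn foldl_rcons -/(RLDn p q x s).
have /andP [h1 h2] := IH hx hs hs0.
by rewrite RLD_pos // RLD_nil.
Qed.

Lemma Aut_rcons x c s :
  Aut p q (rcons x c) s = rcons (Aut p q x s) (OppEnd p q (RLDn p q (rcons x c) s)).
Proof.
rewrite /Aut size_rcons; have -> : (size x).+1 = size x + 1 by rewrite addn1.
rewrite iotaD map_cat -cats1 /=.
rewrite -cats1; congr (_ ++ _).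
  apply/eq_in_map => i; rewrite mem_iota => /andP [_ hi].
  by rewrite takel_cat // -ltnS -add1n.
by rewrite add1n take_oversize // size_cat addn1.
Qed.

Lemma split x s1 s2 : all pos x -> all pos s1 -> s1 != [::] ->
  RLDn p q x (s1 ++ s2) = RLDn p q x s1 ++ RLDn p q (Aut p q x s1) s2.
Proof.
elim/last_ind: x => [|x c IH] //.
rewrite all_rcons => /andP [hc hx] hs hs0.
rewrite Aut_rcons /RLDn !foldl_rcons -!/(RLDn _ _ _ _) IH // RLD_cat.
congr (_ ++ RLD _ _ _ _).
have /andP [h1 h2] := RLDn_props x s1 hx hs hs0.
rewrite /OppEnd RLD_last //.
by move: h2; rewrite -size_eq0; case: (size _) => // k _; rewrite iterS.
Qed.

Lemma Aut_pos x s : all pos (Aut p q x s).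
Proof. by apply/allP => y /mapP [i _ ->]; exact: Opp_pos. Qed.

Lemma main x s : all pos x -> all pos s ->
  RLDn p q x s =
    flatten [seq RLDn p q ya.1 [:: ya.2] | ya <- zip (states p q x s) s].
Proof.
elim: s x => [|a s IH] x hx /=; first by rewrite RLDn_nil.
move=> /andP [ha hs].
by rewrite -IH ?Aut_pos // -(split x [:: a] s hx) //= ha.
Qed.

End S.

Theorem corollary1 (p q n : nat) (x s : seq nat) :
  0 < p -> 0 < q -> p != q -> 1 <= n ->
  size x = n -> all (fun a => (a == p) || (a == q)) x ->
  1 <= size s -> all (fun a => (a == p) || (a == q)) s ->
  RLDn p q x s =
    flatten [seq RLDn p q ya.1 [:: ya.2] | ya <- zip (states p q x s) s].
Proof.
move=> hp hq _ _ _ hx _ hs.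
have P (t : seq nat) : all (fun a => (a == p) || (a == q)) t -> all pos t.
  move=> /allP h; apply/allP => y /h /orP [] /eqP ->; done.
apply: main. all: try (apply: P; assumption). all: assumption.
Qed.
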